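(* The homology $H_\bullet(D)$ of a projective link diagram $D$, constructed below, is invariant (up to isomorphism of triply graded modules) under changing the orientation of the diagram $D$ (equivalently, of any of its components).
   Context: Diagrams. Identify $\mathbb{R}\mathrm{P}^3\setminus\{*\}$ with the twisted $I$-bundle $\mathbb{R}\mathrm{P}^2\tilde\times I$ and project links to $\mathbb{R}\mathrm{P}^2$, viewed as a 2-disk with antipodal boundary points identified. Let $D$ be an oriented projective diagram with set of crossings $\mathcal{X}$, $|\mathcal{X}|=n$, ordered arbitrarily. Each crossing has a sign $\pm1$ by the right-hand rule. Each crossing can be smoothed in type $0$ (the Kauffman $A$-smoothing, carrying coefficient $A$ in the relation $L_\times=AL_0+A^{-1}L_\infty$) or type $1$ (the $B$-smoothing, coefficient $A^{-1}$). A state is $s\in\{0,1\}^{\mathcal X}$; the corresponding complete smoothing is a disjoint union of circles in $\mathbb{R}\mathrm{P}^2$, each trivial (bounding a disk) or projective (not); each state has at most one projective circle. Let $\#0(s),\#1(s)$ be the numbers of $0$'s and $1$'s in $s$. Modules. $V=\langle 1,X\rangle$ is the free bigraded $\mathbb{Z}$-module with $\deg 1=(-2,0)$, $\deg X=(2,0)$; $\overline V=\langle\bar 1,\bar X\rangle$ with $\deg\bar1=(0,1)$, $\deg\bar X=(0,-1)$. For bigraded modules, $W\wedge W'=\bigoplus_{j=j_1+j_2,k=k_1+k_2}W_{j_1,k_1}\wedge W'_{j_2,k_2}$ (the tensor product of the pieces, with the convention that it is associative and reordering factors of a product $W_1\wedge\cdots\wedge W_n$ by a permutation $\sigma$ multiplies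 by $\mathrm{sign}(\sigma)$). The shift is $W\{l\}_{j,k}=W_{j-l,k}$. For a state $s$, enumerate its circles with the projective circle (if any) last, and set $C_s=(V_1\wedge\cdots\wedge V_r)\{\#0(s)-\#1(s)\}$ or $C_s=(V_1\wedge\cdots\wedge V_{r}\wedge\overline V_{r+1})\{\#0(s)-\#1(s)\}$, one factor $V$ per trivial circle and $\overline V$ for the projective circle. Put $C^i=\bigoplus_{\#0(s)-\#1(s)=i}C_s$. Partial differentials. Orient every circle of every state arbitrarily. An edge is $\alpha\in\{0,1,\star\}^{\mathcal X}$ with exactly one $\star$, at crossing $c$; $s_0=\alpha_{\star\to0}$, $s_1=\alpha_{\star\to1}$. Passing from $s_0$ to $s_1$ is a bifurcation of type $2\to1$ (two circles merge), $1\to2$ (one circle splits), or $1\to1$ (one circle becomes one circle); all other circles correspond bijectively. Position $c$ so that its two outgoing diagram arcs point northwest and northeast and incoming arcs come from southwest and southeast. A circle of a state near $c$ is locally consistent at $c$ if its orientation agrees with the diagram orientation of the northeast arc or disagrees with that of the southwest arc, and locally inconsistent if it disagrees with the northeast arc or agrees with the southwest arc. Define $d_\alpha:C_{s_0}\to C_{s_1}$ by $d_\alpha=P_\rho\circ(\varphi\wedge\mathcal I)\circ P_\sigma$, where: $P_\sigma$ permutes wedge factors of $C_{s_0}$ (with sign of the permutation) so that the factors of the circles involved in the bifurcation come first, and for type $2\to1$ the first factor is the left circle if $c$ is positive and the top circle if $c$ is negative; $\varphi=m$ for type $2\to1$, $\varphi=\Delta$ for type $1\to2$ (the first output factor being the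 top circle if $c$ is positive and the left circle if $c$ is negative), and $\varphi=0$ for type $1\to1$; $\mathcal I$ acts on each remaining factor by $1\mapsto1$, $X\mapsto\pm X$ (resp. $\bar1\mapsto\bar1$, $\bar X\mapsto\pm\bar X$), with $+$ iff the chosen orientations of the corresponding circles in $s_0$ and $s_1$ agree; $P_\rho$ reorders the result into the factor order of $C_{s_1}$. In the formulas for $m,\Delta$, write $X'=\epsilon X$, $\bar X'=\epsilon\bar X$, where $\epsilon=+1$ if the circle carrying that factor is locally consistent at $c$ and $-1$ otherwise: $m:V\wedge V\to V$: $1\wedge1\mapsto1$, $1\wedge X'\mapsto X'$, $X'\wedge1\mapsto X'$, $X'\wedge X'\mapsto0$; $\Delta:V\to V\wedge V$: $1\mapsto 1_1\wedge X'_2+X'_1\wedge1_2$, $X'\mapsto X'_1\wedge X'_2$. $m:\overline V\wedge V\to\overline V$: $\bar1\wedge1\mapsto\bar1$, $\bar1\wedge X'\mapsto0$, $\bar X'\wedge1\mapsto\bar X'$, $\bar X'\wedge X'\mapsto0$; $\Delta:\overline V\to\overline V\wedge V$: $\bar1\mapsto\bar1_1\wedge X'_2$, $\bar X'\mapsto\bar X'_1\wedge X'_2$. $m:V\wedge\overline V\to\overline V$: $1\wedge\bar1\mapsto\bar1$, $1\wedge\bar X'\mapsto\bar X'$, $X'\wedge\bar1\mapsto0$, $X'\wedge\bar X'\mapsto0$; $\Delta:\overline V\to V\wedge\overline V$: $\bar1\mapsto X'_1\wedge\bar1_2$, $\bar X'\mapsto X'_1\wedge\bar X'_2$. The total differential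 is $d^{(i)}=\sum d_\alpha:C^i\to C^{i-2}$, summed over all edges $\alpha$ with $\#0(\alpha)-\#1(\alpha)=i-1$; it satisfies $d\circ d=0$. The homology is $H_i(D)=\ker d^{(i)}/\operatorname{im}d^{(i+2)}$, triply graded by $(i,j,k)$. *)

(* Defs.v *)
(* Combinatorial model of oriented projective link diagrams
   (diagrams in RP^2 = disk with antipodal boundary points identified) and of
   the chain complex / homology described in the paper. *)
From HB Require Import structures.
From mathcomp Require Import all_boot all_order all_algebra.
Set Implicit Arguments. Unset Strict Implicit. Unset Printing Implicit Defensive.
Import GRing.Theory Num.Theory.

(* An (unoriented) projective diagram, drawn in the disk model.
   - crossings are 'I_ncross; each crossing c has 4 ports (c,0..3) listed
     counterclockwise in the disk picture, ports 0,2 belonging to the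
     under-strand and ports 1,3 to the over-strand;
   - [mate] pairs the two ports joined by a diagram arc (an edge);
   - [twist p] = parity of the number of times the edge at p crosses the
     boundary of the disk (i.e. meets RP^1);
   - [nfree] crossingless components, with [ftwist j] = their parity of
     boundary crossings (true = projective circle). *)
Record pdiagram := PDiagram {
  ncross : nat;
  nfree : nat;
  mate : ('I_ncross * 'I_4)%type -> ('I_ncross * 'I_4)%type;
  twist : ('I_ncross * 'I_4)%type -> bool;
  ftwist : 'I_nfree -> bool }.
Arguments mate : clear implicits.
Arguments twist : clear implicits.
Arguments ftwist : clear implicits.

Section Diagram.
Variable D : pdiagram.
Local Notation N := (ncross D).

Definition port := ('I_N * 'I_4)%type.

Definition addp (p : port) (j : nat) : port :=
  (p.1, Ordinal (ltn_pmod (p.2 + j) (isT : 0 < 4))).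

Definition well_formed : Prop :=
  (forall p, mate D (mate D p) = p) /\ (forall p, mate D p != p) /\
  (forall p, twist D (mate D p) = twist D p).

(* flag (p,b): a side of the edge at port p; b = true is the counterclockwise
   side (towards port p+1). *)
Definition flag := (port * bool)%type.
Definition tv (x : flag) : flag :=
  if x.2 then (addp x.1 1, false) else (addp x.1 3, true).
Definition te (x : flag) : flag :=
  (mate D x.1, if twist D x.1 then x.2 else ~~ x.2).
Definition faceRel : rel flag := fun x y => (y == tv x) || (y == te x).
Definition compRel : rel flag :=
  fun x y => faceRel x y || (y == (x.1, ~~ x.2)).
(* Euler characteristic (faces - vertices + edges, with E = 2V) of the
   closed surface of the connected component of the ribbon graph containing r *)
Definition chi (r : flag) : int :=
  (#|[set x | connect compRel r x & x \in roots faceRel]|)%:Z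
  - (#|[set c : 'I_N | connect compRel r ((c, ord0), false)]|)%:Z.
(* The diagram embeds in RP^2: every component is cellularly embedded in a
   sphere (chi = 2) or in RP^2 (chi = 1), and altogether at most one of them
   is of RP^2-type or is a projective crossingless circle. *)
Definition realizable : Prop :=
  (forall r, r \in roots compRel -> chi r = 2 \/ chi r = 1) /\
  (#|[set r | (r \in roots compRel) && (chi r == 1)]|
     + #|[set j | ftwist D j]| <= 1)%N.

(* An orientation: o p = true iff the diagram orientation points away from
   the crossing along port p. *)
Definition orientation (o : port -> bool) : Prop :=
  (forall c : 'I_N, o (c, inord 0) != o (c, inord 2)) /\
  (forall c : 'I_N, o (c, inord 1) != o (c, inord 3)) /\
  (forall p, o (mate D p) != o p).

(* s c = false : 0-smoothing (Kauffman A), s c = true : 1-smoothing (B) *)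
Definition state := {ffun 'I_N -> bool}.

(* the port joined to p by the smoothing at its crossing:
   A pairs {0,1},{2,3};  B pairs {1,2},{3,0} *)
Definition sm (s : state) (p : port) : port :=
  if s p.1 then (if odd p.2 then addp p 1 else addp p 3)
  else (if odd p.2 then addp p 3 else addp p 1).

(* travelling along a circle: arrive at p, cross the smoothing, leave along
   the edge, arrive at the next port *)
Definition step (s : state) (p : port) : port := mate D (sm s p).

Definition circ (s : state) (p : port) : {set port} :=
  [set q | fconnect (step s) p q || fconnect (step s) p (sm s q)].

Definition cmin (s : state) (p : port) : port :=
  [arg min_(q < p in circ s p) (enum_rank q : nat)].

(* canonical orientation of a circle: the direction in which it arrives at
   its least port; canon s p q <-> the circle of p, so oriented, arrives at
   the crossing of q through q *)
Definition canon (s : state) (p q : port) : bool := fconnect (step s) (cmin s p) q.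

Definition projc (s : state) (p : port) : bool :=
  odd #|[set q | canon s p q && twist D (sm s q)]|.

Definition cid := (port + 'I_(nfree D))%type.

Definition is_circle (s : state) (x : cid) : bool :=
  match x with inl p => cmin s p == p | inr _ => true end.
Definition cproj (s : state) (x : cid) : bool :=
  match x with inl p => projc s p | inr j => ftwist D j end.

Definition corder (s : state) : seq cid :=
  [seq x <- enum {: cid} | is_circle s x && ~~ cproj s x] ++
  [seq x <- enum {: cid} | is_circle s x && cproj s x].

(* labelling of circles: false = 1 (resp. 1bar), true = X (resp. Xbar) *)
Definition lab := {ffun cid -> bool}.
Definition basis := (state * lab)%type.
Definition valid (b : basis) : bool :=
  [forall x, ~~ is_circle b.1 x ==> ~~ b.2 x].

Definition ideg (s : state) : int :=
  (#|[set c | ~~ s c]|)%:Z - (#|[set c | s c]|)%:Z.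
Definition jdeg (b : basis) : int :=
  ideg b.1 + \sum_(x | is_circle b.1 x && ~~ cproj b.1 x)
               (if b.2 x then 2%:Z else (- 2%:Z)%R).
Definition kdeg (b : basis) : int :=
  \sum_(x | is_circle b.1 x && cproj b.1 x) (if b.2 x then (- 1%:Z)%R else 1%:Z).

Definition ne (o : port -> bool) (c : 'I_N) : port :=
  (c, odflt ord0 [pick k : 'I_4 | o (c, k) && o (addp (c, k) 1)]).
Definition nw o c := addp (ne o c) 1.
Definition sw o c := addp (ne o c) 2.
Definition se o c := addp (ne o c) 3.

Definition cidp (s : state) (p : port) : cid := inl (cmin s p).

(* epsilon of the circle through p (in state s) at crossing c: +1 iff the
   circle is locally consistent at c *)
Definition eps (o : port -> bool) (c : 'I_N) (s : state) (p : port) : int :=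
  let q := if ne o c \in circ s p then ne o c else sw o c in
  if canon s p q then (-1)%R else 1%R.

Definition xs (e : int) (b : bool) : int := if b then e else 1%R.

End Diagram.

Definition perm_sign (T : eqType) (s t : seq T) : int :=
  ((-1) ^+ (size [seq xy <- [seq (x, y) | x <- s, y <- s]
                | (index xy.1 s < index xy.2 s)%N && (index xy.2 t < index xy.1 t)%N]))%R.

Section Complex.
Local Open Scope ring_scope.
Variable D : pdiagram.
Variable o : port D -> bool.
Local Notation N := (ncross D).

(* matrix coefficient of the partial differential d_alpha, alpha having its
   star at c, from generator b0 of C_{s0} to generator b1 of C_{s1}.
   The "first" circle (left if c positive / top if c negative, for s0; top if
   positive / left if negative, for s1) is in all cases the circle through
   the NW port; the other circle at c is the one through SE. *)
Definition dedge (c : 'I_N) (b0 b1 : basis D) : int :=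
  let s0 := b0.1 in let l0 := b0.2 in let s1 := b1.1 in let l1 := b1.2 in
  if ~~ (valid b0 && valid b1) then 0 else
  let a := cidp s0 (nw o c) in let b := cidp s0 (se o c) in
  let o1 := cidp s1 (nw o c) in let o2 := cidp s1 (se o c) in
  let ord0 := corder s0 in let ord1 := corder s1 in
  if (a != b) && (o1 == o2) then
    let rest := [seq x <- ord0 | x \notin [:: a; b]] in
    if [forall x, (x \in rest) ==> (l1 x == l0 x)]
       && (l1 o1 == l0 a || l0 b) && ~~ (l0 a && l0 b)
       && (cproj s0 a ==> ~~ l0 b) && (cproj s0 b ==> ~~ l0 a)
    then perm_sign ord0 (a :: b :: rest) * perm_sign (o1 :: rest) ord1
         * xs (eps o c s0 (nw o c)) (l0 a) * xs (eps o c s0 (se o c)) (l0 b)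
         * xs (eps o c s1 (nw o c)) (l1 o1)
    else 0
  else if (a == b) && (o1 != o2) then
    let rest := [seq x <- ord0 | x != a] in
    if [forall x, (x \in rest) ==> (l1 x == l0 x)]
       && (if cproj s0 a then
             (if cproj s1 o1 then (l1 o1 == l0 a) && l1 o2
              else (l1 o2 == l0 a) && l1 o1)
           else (if l0 a then l1 o1 && l1 o2 else l1 o1 != l1 o2))
    then perm_sign ord0 (a :: rest) * perm_sign (o1 :: o2 :: rest) ord1
         * xs (eps o c s0 (nw o c)) (l0 a) * xs (eps o c s1 (nw o c)) (l1 o1)
         * xs (eps o c s1 (se o c)) (l1 o2)
    else 0
  else 0 .

Definition is_edge (c : 'I_N) (s0 s1 : state D) : bool :=
  ~~ s0 c && s1 c && [forall c', (c' != c) ==> (s0 c' == s1 c')].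

Definition dcoef (b0 b1 : basis D) : int :=
  \sum_(c | is_edge c b0.1 b1.1) dedge c b0 b1.

Definition chain := {ffun basis D -> int}.

Definition dmap (x : chain) : chain :=
  [ffun b1 => \sum_b0 x b0 * dcoef b0 b1].

Definition inC (i : int) (x : chain) : Prop :=
  forall b, x b != 0 -> valid b /\ ideg b.1 = i.
Definition inCg (i j k : int) (x : chain) : Prop :=
  forall b, x b != 0 -> [/\ valid b, ideg b.1 = i, jdeg b = j & kdeg b = k].

(* cycles and boundaries in tridegree (i,j,k):
   H_{i,j,k} = (ker d^(i))_{j,k} / (im d^(i+2))_{j,k} *)
Definition hcycle (i j k : int) (x : chain) : Prop := inCg i j k x /\ dmap x = 0.
Definition hbound (i j k : int) (x : chain) : Prop :=
  inCg i j k x /\ exists y, inC (i + 2) y /\ dmap y = x.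

End Complex.
Local Open Scope ring_scope.

(* H(D1,o1) and H(D2,o2) are isomorphic as triply graded modules: in every
   tridegree there is a homomorphism of cycle groups, mapping boundaries to
   boundaries, inducing a bijection on the quotients. *)
Definition homology_iso (D1 D2 : pdiagram) (o1 : port D1 -> bool)
    (o2 : port D2 -> bool) : Prop :=
  forall i j k : int, exists f : chain D1 -> chain D2,
    [/\ (forall x y, hcycle o1 i j k x -> hcycle o1 i j k y -> f (x + y) = f x + f y),
        (forall x, hcycle o1 i j k x -> hcycle o2 i j k (f x)),
        (forall x, hbound o1 i j k x -> hbound o2 i j k (f x)),
        (forall x, hcycle o1 i j k x -> hbound o2 i j k (f x) -> hbound o1 i j k x)
      & (forall z, hcycle o2 i j k z -> exists x, hcycle o1 i j k x /\ hbound o2 i j k (z - f x))].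

(* Main.v *)
Require Import Defs.
From mathcomp Require Import all_boot all_order all_algebra.
Set Implicit Arguments. Unset Strict Implicit. Unset Printing Implicit Defensive.

Lemma addp1 (D : pdiagram) (p : port D) : (addp p 0) = p.
Proof.
case: p => c [k Hk]; rewrite /addp /=; congr pair; apply: val_inj => /=.
by rewrite addn0 modn_small.
Qed.

Lemma addpA (D : pdiagram) (p : port D) i j : addp (addp p i) j = addp p (i + j).
Proof.
case: p => c [k Hk]; rewrite /addp /=; congr pair; apply: val_inj => /=.
by rewrite modnDml addnA.
Qed.

Lemma addp_fst (D : pdiagram) (p : port D) j : (addp p j).1 = p.1.
Proof. by []. Qed.

Lemma addp4 (D : pdiagram) (p : port D) : addp p 4 = p.
Proof.
case: p => c [k Hk]; rewrite /addp /=; congr pair; apply: val_inj => /=.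
by rewrite modnDr modn_small.
Qed.

Lemma addp_mod (D : pdiagram) (p : port D) j : addp p j = addp p (j %% 4).
Proof.
case: p => c [k Hk]; rewrite /addp /=; congr pair; apply: val_inj => /=.
by rewrite modnDmr.
Qed.

Lemma at_rot (D : pdiagram) (p y : port D) : y.1 = p.1 ->
  exists i, i < 4 /\ y = addp p i.
Proof.
case: p y => c [k Hk] [c' [k' Hk']] /= ->.
exists ((k' + 4 - k) %% 4); split; first by rewrite ltn_mod.
rewrite /addp /=; congr pair; apply: val_inj => /=.
rewrite modnDmr.
by move: Hk Hk'; do 4?[case: k => [|k]] => // _; do 4?[case: k' => [|k']].
Qed.

Lemma sm_fst (D : pdiagram) (s : state D) p : (sm s p).1 = p.1.
Proof. by rewrite /sm; case: ifP; case: ifP. Qed.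

Lemma smE (D : pdiagram) (s : state D) (p : port D) :
  sm s p = addp p (if s p.1 == odd p.2 then 1 else 3).
Proof. by rewrite /sm; case: (s p.1); case: (odd p.2). Qed.

Lemma odd_addp (D : pdiagram) (p : port D) j : odd (addp p j).2 = odd p.2 (+) odd j.
Proof. by case: p => c [k Hk] /=; rewrite odd_mod // oddD. Qed.

Lemma sm_invol (D : pdiagram) (s : state D) p : sm s (sm s p) = p.
Proof.
rewrite [sm s p]smE smE addp_fst odd_addp addpA.
case: (s p.1); case: (odd p.2) => /=; by rewrite addp_mod addp1.
Qed.

Lemma addp_eq (D : pdiagram) (p : port D) i j : (addp p i == addp p j) = (i %% 4 == j %% 4).
Proof.
case: p => c [k Hk]; rewrite /addp xpair_eqE eqxx /=.
apply/eqP/eqP => [H|H]; last by apply: val_inj; rewrite /= -modnDmr H modnDmr.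
have := congr1 val H => /= /eqP; rewrite -(modnDmr k i) -(modnDmr k j).
have : i %% 4 < 4 by rewrite ltn_mod.
have : j %% 4 < 4 by rewrite ltn_mod.
move: (i %% 4) (j %% 4) => a b; move: Hk => Hk Hb Ha.
by rewrite eqn_modDl !modn_small // => /eqP.
Qed.

Lemma sm_neq (D : pdiagram) (s : state D) p : sm s p != p.
Proof.
rewrite smE; apply/negP => /eqP H.
have : addp p (if s p.1 == odd p.2 then 1 else 3) == addp p 0 by rewrite addp1 H.
by rewrite addp_eq; case: ifP.
Qed.

Lemma sm_rot2 (D : pdiagram) (s : state D) p : sm s (addp p 2) = addp (sm s p) 2.
Proof. by rewrite !smE addp_fst odd_addp /= addbF !addpA addnC. Qed.

Lemma sm_same (D : pdiagram) (s s' : state D) p : s p.1 = s' p.1 -> sm s p = sm s' p.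
Proof. by rewrite /sm => ->. Qed.

Lemma sm_other (D : pdiagram) (s s' : state D) p : s p.1 != s' p.1 ->
  sm s' (sm s p) = addp p 2.
Proof.
rewrite [sm s p]smE smE addp_fst odd_addp addpA.
case: (s p.1); case: (s' p.1); case: (odd p.2) => //= _; by rewrite addp_mod.
Qed.

Lemma sm_diff (D : pdiagram) (s s' : state D) p : s p.1 != s' p.1 -> sm s p != sm s' p.
Proof.
rewrite smE [sm s' _]smE addp_eq.
by case: (s p.1); case: (s' p.1); case: (odd p.2).
Qed.

Definition mate_inv (D : pdiagram) := forall p, mate D (mate D p) = p.
Definition mate_nfix (D : pdiagram) := forall p, mate D p != p.

Lemma step_inj (D : pdiagram) (hm : mate_inv D) (s : state D) : injective (step s).
Proof.
move=> x y; rewrite /step => /(congr1 (mate D)); rewrite !hm => /(congr1 (sm s)).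
by rewrite !sm_invol.
Qed.

Lemma step_sm_step (D : pdiagram) (hm : mate_inv D) (s : state D) x :
  step s (sm s (step s x)) = sm s x.
Proof. by rewrite /step sm_invol hm. Qed.

Lemma iter_sm (D : pdiagram) (hm : mate_inv D) (s : state D) n x :
  iter n (step s) (sm s (iter n (step s) x)) = sm s x.
Proof.
elim: n x => [|n IH] x //.
by rewrite iterSr iterS step_sm_step // IH.
Qed.

Lemma fconn_sym (D : pdiagram) (hm : mate_inv D) (s : state D) x y :
  fconnect (step s) x y = fconnect (step s) y x.
Proof. by apply: fconnect_sym; apply: step_inj. Qed.

Lemma fconn_trans (D : pdiagram) (s : state D) x y z :
  fconnect (step s) x y -> fconnect (step s) y z -> fconnect (step s) x z.
Proof. exact: connect_trans. Qed.

Lemma fconn_sm (D : pdiagram) (hm : mate_inv D) (s : state D) x y :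
  fconnect (step s) x y -> fconnect (step s) (sm s y) (sm s x).
Proof.
move=> /iter_findex <-; rewrite -(iter_sm hm s (findex (step s) x y) x).
exact: fconnect_iter.
Qed.

Lemma fconn_smE (D : pdiagram) (hm : mate_inv D) (s : state D) x y :
  fconnect (step s) (sm s x) y = fconnect (step s) x (sm s y).
Proof.
apply/idP/idP => H.
  by have := fconn_sm hm H; rewrite sm_invol fconn_sym.
by have := fconn_sm hm H; rewrite sm_invol fconn_sym.
Qed.

Lemma no_loop (D : pdiagram) (hm : mate_inv D) (hn : mate_nfix D) (s : state D) x :
  ~~ fconnect (step s) x (sm s x).
Proof.
apply/negP => /iter_findex; move: (findex _ _ _) => n.
elim: n {-2}n (leqnn n) x => [|N IH] n.
  by rewrite leqn0 => /eqP -> x /= H; move: (sm_neq s x); rewrite -H eqxx.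
case: n => [|[|n]] Hn x.
- by move=> /= H; move: (sm_neq s x); rewrite -H eqxx.
- by move=> /= H; move: (hn (sm s x)); rewrite -[X in mate D _ != X]H /step eqxx.
- move=> H.
  have H2 : sm s (step s x) = iter n (step s) (step s x).
    apply: (@step_inj D hm s); rewrite step_sm_step // -H.
    by rewrite iterSr iterS.
  by apply: (IH n _ (step s x)); first by rewrite -ltnS (leq_trans _ Hn).
Qed.

Lemma circE (D : pdiagram) (s : state D) p y :
  (y \in circ s p) = fconnect (step s) p y || fconnect (step s) p (sm s y).
Proof. by rewrite inE. Qed.

Lemma circ_self (D : pdiagram) (s : state D) p : p \in circ s p.
Proof. by rewrite circE connect0. Qed.

Lemma circ_sm_mem (D : pdiagram) (s : state D) p y :
  (sm s y \in circ s p) = (y \in circ s p).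
Proof. by rewrite !circE sm_invol orbC. Qed.

Lemma same_fconn (D : pdiagram) (hm : mate_inv D) (s : state D) a b z :
  fconnect (step s) a b -> fconnect (step s) a z = fconnect (step s) b z.
Proof.
move=> Hab; apply/idP/idP => H.
  by apply: fconn_trans H; rewrite fconn_sym.
exact: fconn_trans H.
Qed.

Lemma circ_trans (D : pdiagram) (hm : mate_inv D) (s : state D) p y :
  y \in circ s p -> circ s y = circ s p.
Proof.
rewrite circE => /orP [H|H]; apply/setP => z; rewrite !circE.
  by rewrite !(same_fconn hm _ H).
by rewrite !(same_fconn hm _ H) !fconn_smE // sm_invol orbC.
Qed.

Lemma cmin_spec (D : pdiagram) (s : state D) p :
  cmin s p \in circ s p /\ forall q, q \in circ s p -> (enum_rank (cmin s p) <= enum_rank q)%N.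
Proof.
rewrite /cmin; case: arg_minnP; first exact: circ_self.
by move=> m Hm Hmin; split.
Qed.

Lemma cmin_eq (D : pdiagram) (s : state D) p p' :
  circ s p = circ s p' -> cmin s p = cmin s p'.
Proof.
move=> E; have [H1 H2] := cmin_spec s p; have [H1' H2'] := cmin_spec s p'.
rewrite E in H1 H2.
apply: enum_rank_inj; apply: val_inj; apply/eqP; rewrite eqn_leq.
by rewrite H2 // H2'.
Qed.

Lemma cmin_mem (D : pdiagram) (hm : mate_inv D) (s : state D) p y :
  y \in circ s p -> cmin s y = cmin s p.
Proof. by move=> H; apply: cmin_eq; apply: circ_trans. Qed.

Lemma cmin_in (D : pdiagram) (s : state D) p : cmin s p \in circ s p.
Proof. by case: (cmin_spec s p). Qed.

Lemma cmin_sm (D : pdiagram) (hm : mate_inv D) (s : state D) p :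
  cmin s (sm s p) = cmin s p.
Proof. by apply: cmin_mem => //; rewrite circ_sm_mem circ_self. Qed.

Lemma cmin_idem (D : pdiagram) (hm : mate_inv D) (s : state D) p :
  cmin s (cmin s p) = cmin s p.
Proof. exact: cmin_mem (cmin_in s p). Qed.

Lemma circ_cmin (D : pdiagram) (hm : mate_inv D) (s : state D) p :
  circ s (cmin s p) = circ s p.
Proof. exact: circ_trans (cmin_in s p). Qed.

Lemma canon_sm (D : pdiagram) (hm : mate_inv D) (hn : mate_nfix D) (s : state D) p y :
  y \in circ s p -> canon s p (sm s y) = ~~ canon s p y.
Proof.
rewrite /canon -(circ_cmin hm) circE; move: (cmin s p) => m.
case/orP => H.
  rewrite H /=; apply/negP => H2.
  by move: (no_loop hm hn s y); rewrite (fconn_trans _ H2) // fconn_sym.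
rewrite H; apply/esym/negP => H2.
move: (no_loop hm hn s y); rewrite (fconn_trans _ H) //.
by rewrite fconn_sym.
Qed.

Lemma canon_eq (D : pdiagram) (s : state D) p p' :
  circ s p = circ s p' -> canon s p = canon s p'.
Proof. by move=> E; rewrite /canon (cmin_eq E). Qed.

Lemma fclosed_sub (T : finType) (f : T -> T) (A : pred T) x y :
  (forall w, A w -> A (f w)) -> A x -> fconnect f x y -> A y.
Proof.
move=> HA Ax /iter_findex <-; elim: (findex f x y) => [|n IH] //=.
exact: HA.
Qed.

Lemma nbr (D : pdiagram) (s s' : state D) z : s z.1 != s' z.1 ->
  (sm s z = addp z 1 /\ sm s' z = addp z 3) \/ (sm s z = addp z 3 /\ sm s' z = addp z 1).
Proof.
rewrite !smE; case: (s z.1); case: (s' z.1); case: (odd z.2) => //= _; by [left|right].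
Qed.

Lemma rot4 (D : pdiagram) (z w : port D) : w.1 = z.1 ->
  [\/ w = z, w = addp z 1, w = addp z 2 | w = addp z 3].
Proof.
move=> /at_rot [i [Hi ->]].
by move: Hi; do 4?[case: i => [|i]] => //= _; [constructor 1; rewrite addp1|constructor 2|constructor 3|constructor 4].
Qed.

Lemma circ_step (D : pdiagram) (hm : mate_inv D) (s : state D) p w :
  w \in circ s p -> step s w \in circ s p.
Proof.
rewrite !circE => /orP [H|H]; apply/orP.
  by left; apply: fconn_trans H (fconnect1 _ _).
right; apply: fconn_trans H _.
by rewrite fconn_sym //; rewrite -(step_sm_step hm s w); apply: fconnect1.
Qed.

Lemma step_off (D : pdiagram) (c : 'I_(ncross D)) (s s' : state D)
  (Hoff : forall x, x != c -> s x = s' x) p : p.1 != c -> step s p = step s' p.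
Proof. by move=> H; rewrite /step (sm_same (s' := s')) // Hoff. Qed.

Lemma opp_inv (D : pdiagram) (hm : mate_inv D) (t t' : state D) (y z : port D) :
  t y.1 != t' y.1 -> z.1 = y.1 -> cmin t y != cmin t (addp y 2) ->
  cmin t z != cmin t (addp z 2).
Proof.
move=> Hd Hz Hy.
have E22 : addp (addp y 2) 2 = y by rewrite addpA addp4.
case: (rot4 Hz) => ->; first by [].
- case: (nbr Hd) => [[E1 E2]|[E1 E2]].
    by rewrite -E1 cmin_sm // -sm_rot2 cmin_sm.
  have E3 : sm t' y = sm t (addp y 2).
    by rewrite -(sm_other (s := t') (s' := t)) 1?eq_sym // sm_invol.
  by rewrite -E2 E3 cmin_sm // -sm_rot2 E22 cmin_sm // eq_sym.
- by rewrite E22 eq_sym.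
- case: (nbr Hd) => [[E1 E2]|[E1 E2]]; last first.
    by rewrite -E1 cmin_sm // -sm_rot2 cmin_sm.
  have E3 : sm t' y = sm t (addp y 2).
    by rewrite -(sm_other (s := t') (s' := t)) 1?eq_sym // sm_invol.
  by rewrite -E2 E3 cmin_sm // -sm_rot2 E22 cmin_sm // eq_sym.
Qed.

Lemma glue (D : pdiagram) (hm : mate_inv D) (hn : mate_nfix D) (c : 'I_(ncross D))
  (s s' : state D) (Hc : s c != s' c) (Hoff : forall x, x != c -> s x = s' x) z1 :
  z1.1 = c -> fconnect (step s) z1 (sm s' z1) -> cmin s' z1 = cmin s' (addp z1 2).
Proof.
move=> Hz1 H; set z2 := sm s' z1 in H.
have Hc1 : s z1.1 != s' z1.1 by rewrite Hz1.
have Ez2 : sm s z2 = addp z1 2 by rewrite /z2 sm_other // eq_sym.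
have Ew2 : sm s' (addp z1 2) = sm s z1.
  by rewrite -(sm_other (s := s) (s' := s')) // sm_invol.
set t := findex (step s) z1 z2.
have Ht : iter t (step s) z1 = z2 := iter_findex H.
have Hto : t < order (step s) z1 := findex_max H.
have Ht0 : 0 < t by rewrite lt0n findex_eq0 eq_sym sm_neq.
have Hnc : forall j, 0 < j < t -> (iter j (step s) z1).1 != c.
  move=> j /andP [j0 jt]; apply/negP => /eqP Hw.
  have jo : j < order (step s) z1 by apply: ltn_trans Hto.
  have Hfi := findex_iter jo.
  have Hw' : (iter j (step s) z1).1 = z1.1 by rewrite Hw Hz1.
  case: (rot4 Hw') => E.
  - by move: Hfi; rewrite E findex0 => Ej; move: j0; rewrite -Ej.
  - case: (nbr Hc1) => [[E1 E2]|[E1 E2]].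
      by move: (no_loop hm hn s z1); rewrite E1 -E fconnect_iter.
    by move: Hfi jt; rewrite E -E2 -/z2 -/t => ->; rewrite ltnn.
  - move: (no_loop hm hn s z2); rewrite Ez2 -E.
    by rewrite (fconn_trans _ (fconnect_iter _ j _)) // fconn_sym.
  - case: (nbr Hc1) => [[E1 E2]|[E1 E2]]; last first.
      by move: (no_loop hm hn s z1); rewrite E1 -E fconnect_iter.
    by move: Hfi jt; rewrite E -E2 -/z2 -/t => ->; rewrite ltnn.
have Hit : forall j, j < t -> iter j.+1 (step s') (addp z1 2) = iter j.+1 (step s) z1.
  elim=> [|j IH] Hj; first by rewrite /= /step Ew2.
  transitivity (step s' (iter j.+1 (step s') (addp z1 2))); first by [].
  rewrite IH; last exact: ltnW.
  rewrite -(step_off Hoff); first by [].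
  by apply: Hnc; rewrite Hj.
have Hf : fconnect (step s') (addp z1 2) z2.
  have H1 : t.-1 < t by rewrite ltn_predL.
  move: (Hit _ H1); rewrite prednK // Ht => <-; exact: fconnect_iter.
rewrite -(cmin_sm hm s' z1) -/z2.
apply: cmin_mem => //; by rewrite circE Hf.
Qed.

Lemma hcond (D : pdiagram) (hm : mate_inv D) (hn : mate_nfix D) (c : 'I_(ncross D))
  (s s' : state D) (Hc : s c != s' c) (Hoff : forall x, x != c -> s x = s' x) y :
  y.1 = c -> (cmin s y != cmin s (addp y 2)) || (cmin s' y != cmin s' (addp y 2)) ->
  forall z p, z.1 = c -> z \in circ s p -> sm s' z \in circ s p ->
  canon s p (sm s' z) = ~~ canon s p z.
Proof.
move=> Hy Hsep z p Hz Hzin Hzin'.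
have Hdz : s z.1 != s' z.1 by rewrite Hz.
have Hdy : s y.1 != s' y.1 by rewrite Hy.
have Hzy : z.1 = y.1 by rewrite Hz Hy.
have E2 : sm s (sm s' z) = addp z 2 by rewrite sm_other // eq_sym.
have E2' : sm s' (sm s z) = addp z 2 by rewrite sm_other.
case/orP: Hsep => Hsep.
  have := opp_inv hm Hdy Hzy Hsep.
  have H2 : addp z 2 \in circ s p by rewrite -E2 circ_sm_mem.
  by rewrite (cmin_mem hm Hzin) (cmin_mem hm H2) eqxx.
have Hdy' : s' y.1 != s y.1 by rewrite eq_sym.
have Hnz := opp_inv hm Hdy' Hzy Hsep.
rewrite /canon; set m := cmin s p.
have Hm : circ s m = circ s p by apply: circ_cmin.
case Ez: (fconnect (step s) m z); case Ew: (fconnect (step s) m (sm s' z)) => //.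
  have Hzz : fconnect (step s) z (sm s' z) by apply: fconn_trans Ew; rewrite fconn_sym.
  by move: Hnz; rewrite (glue hm hn Hc Hoff Hz Hzz) eqxx.
set u := sm s z.
have Hu : fconnect (step s) m u.
  by move: (canon_sm hm hn Hzin); rewrite /canon -/m Ez /= => ->.
have Hu' : fconnect (step s) m (sm s' u).
  by move: (canon_sm hm hn Hzin'); rewrite /canon -/m Ew /= E2 -E2' => ->.
have Huu : fconnect (step s) u (sm s' u) by apply: fconn_trans Hu'; rewrite fconn_sym.
have Hu1 : u.1 = c by rewrite sm_fst.
have Huy : u.1 = y.1 by rewrite Hu1 Hy.
have := opp_inv hm Hdy' Huy Hsep.
by rewrite (glue hm hn Hc Hoff Hu1 Huu) eqxx.
Qed.

Definition EPS (D : pdiagram) (q : port D) (s : state D) (p : port D) : int :=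
  let r := if q \in circ s p then q else addp q 2 in
  if canon s p r then (-1)%R else 1%R.

Lemma addpN (D : pdiagram) (q : port D) :
  [/\ addp q 4 = q, addp q 5 = addp q 1, addp q 6 = addp q 2 & addp q 0 = q].
Proof. by rewrite addp4 (addp_mod q 5) (addp_mod q 6) addp1. Qed.

Lemma EPS_flip (D : pdiagram) (hm : mate_inv D) (hn : mate_nfix D) (c : 'I_(ncross D))
  (s s' : state D) (Hc : s c != s' c) (q p : port D) :
  q.1 = c -> p.1 = c ->
  (forall z, z.1 = c -> z \in circ s p -> sm s' z \in circ s p ->
     canon s p (sm s' z) = ~~ canon s p z) ->
  EPS (addp q 1) s p = (- EPS q s p)%R.
Proof.
move=> Hq Hp HC.
have [A4 A5 A6 A0] := addpN q.
have N : forall z w, z.1 = c -> z \in circ s p -> w \in circ s p ->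
    (w = addp z 1 \/ w = addp z 3) -> canon s p w = ~~ canon s p z.
  move=> z w Hz Hzi Hwi Hw.
  have Hd : s z.1 != s' z.1 by rewrite Hz.
  case: (nbr Hd) => [[E1 E2]|[E1 E2]]; case: Hw => Hw.
  - by rewrite Hw -E1 canon_sm.
  - by rewrite Hw -E2 HC // E2 -Hw.
  - by rewrite Hw -E2 HC // E2 -Hw.
  - by rewrite Hw -E1 canon_sm.
have Hd : forall i, s (addp q i).1 != s' (addp q i).1 by move=> i; rewrite addp_fst Hq.
have Ha : forall i, (addp q i).1 = c by move=> i; rewrite addp_fst.
suff : canon s p (if addp q 1 \in circ s p then addp q 1 else addp (addp q 1) 2) =
       ~~ canon s p (if q \in circ s p then q else addp q 2).
  by rewrite /EPS => ->; case: (canon _ _ _).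
rewrite addpA /=.
case Hq0 : (q \in circ s p).
  case Hq1 : (addp q 1 \in circ s p).
    by apply: N => //; left.
  have Hs := Hq0; rewrite -circ_sm_mem in Hs.
  have Hq1' := Hd 0; rewrite A0 in Hq1'.
  case: (nbr Hq1') => [[E1 E2]|[E1 E2]]; first by rewrite -E1 Hs in Hq1.
  by apply: N => //; [rewrite -E1 | right].
have Hq2 : addp q 2 \in circ s p.
  have Hp' : p.1 = q.1 by rewrite Hp Hq.
  have Hpi := circ_self s p.
  case: (rot4 Hp') => E; rewrite {1}E in Hpi.
  - by rewrite Hpi in Hq0.
  - rewrite -circ_sm_mem in Hpi.
    case: (nbr (Hd 1)) => [[E1 E2]|[E1 E2]]; first by rewrite E1 addpA in Hpi.
    by move: Hpi; rewrite E1 addpA A4 Hq0.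
  - by [].
  - rewrite -circ_sm_mem in Hpi.
    case: (nbr (Hd 3)) => [[E1 E2]|[E1 E2]]; first by move: Hpi; rewrite E1 addpA A4 Hq0.
    by move: Hpi; rewrite E1 addpA A6.
case Hq1 : (addp q 1 \in circ s p).
  by apply: N => //; right; rewrite addpA A5.
have Hs := Hq2; rewrite -circ_sm_mem in Hs.
case: (nbr (Hd 2)) => [[E1 E2]|[E1 E2]].
  rewrite E1 addpA in Hs.
  by apply: (N (addp q 2) (addp q 3)) => //; left; rewrite addpA.
by move: Hs; rewrite E1 addpA A5 Hq1.
Qed.

Definition tw_sym (D : pdiagram) := forall p, twist D (mate D p) = twist D p.

Definition TWS (D : pdiagram) (s : state D) (x : port D) : nat :=
  #|[set q | fconnect (step s) x q & twist D q]|.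

Lemma tw_step (D : pdiagram) (hm : mate_inv D) (ht : tw_sym D) (s : state D) x :
  #|[set q | fconnect (step s) x q & twist D (sm s q)]| = TWS s x.
Proof.
rewrite /TWS -[RHS](card_preimset _ (@step_inj D hm s)); apply: eq_card => q.
rewrite !inE /step ht.
by rewrite -(same_fconnect1_r (@step_inj D hm s)).
Qed.

Lemma sm_inj (D : pdiagram) (s : state D) : injective (sm s).
Proof. exact: (can_inj (@sm_invol D s)). Qed.

Lemma tw_sm (D : pdiagram) (hm : mate_inv D) (ht : tw_sym D) (s : state D) x :
  TWS s (sm s x) = TWS s x.
Proof.
rewrite -(tw_step hm ht s x) {1}/TWS -[RHS](card_preimset _ (@sm_inj D s)).
by apply: eq_card => q; rewrite !inE fconn_smE // sm_invol.
Qed.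

Lemma projc_TW (D : pdiagram) (hm : mate_inv D) (ht : tw_sym D) (s : state D) p x :
  x \in circ s p -> projc s p = odd (TWS s x).
Proof.
rewrite /projc /canon -(circ_cmin hm) circE; move: (cmin s p) => m Hx.
rewrite (tw_step hm ht s m).
case/orP: Hx => Hx.
  by rewrite /TWS; congr (odd _); apply: eq_card => q; rewrite !inE (same_fconn hm _ Hx).
rewrite -(tw_sm hm ht s x) /TWS; congr (odd _); apply: eq_card => q.
by rewrite !inE (same_fconn hm _ Hx).
Qed.

Lemma tw_split (D : pdiagram) (hm : mate_inv D) (hn : mate_nfix D) (c : 'I_(ncross D))
  (s s' : state D) (Hc : s c != s' c) (Hoff : forall x, x != c -> s x = s' x) z1 :
  z1.1 = c -> cmin s' z1 != cmin s' (addp z1 2) ->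
  fconnect (step s) z1 (addp z1 2) ->
  TWS s z1 = TWS s' z1 + TWS s' (addp z1 2).
Proof.
move=> Hz1 Hsep H; set z2 := addp z1 2 in Hsep H *.
have Hc1 : s z1.1 != s' z1.1 by rewrite Hz1.
have Hc1' : s' z1.1 != s z1.1 by rewrite eq_sym.
have E1 : sm s' z1 = sm s z2 by rewrite /z2 -(sm_other Hc1') sm_invol.
have E2 : sm s' z2 = sm s z1 by rewrite /z2 -(sm_other Hc1) sm_invol.
have Hz2 : z2.1 = c by rewrite addp_fst.
have S12 : ~~ fconnect (step s') z1 z2.
  apply/negP => H12; move: Hsep; rewrite (cmin_mem hm (p := z1) (y := z2)) ?eqxx //.
  by rewrite circE H12.
have S12' : ~~ fconnect (step s') z1 (sm s' z2).
  apply/negP => H12; move: Hsep; rewrite (cmin_mem hm (p := z1) (y := z2)) ?eqxx //.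
  by rewrite circE H12 orbT.
have S21' : ~~ fconnect (step s') z2 (sm s' z1).
  apply/negP => H12; move: Hsep; rewrite (cmin_mem hm (p := z2) (y := z1)) ?eqxx //.
  by rewrite circE H12 orbT.
have Hports : forall w, w.1 = c -> [\/ w = z1, w = z2, w = sm s z1 | w = sm s z2].
  move=> w Hw; have Hw' : w.1 = z1.1 by rewrite Hw Hz1.
  case: (rot4 Hw') => ->; [by constructor 1|idtac|by constructor 2|idtac];
    (case: (nbr Hc1) => [[F1 F2]|[F1 F2]]; [idtac|idtac]).
  - by constructor 3.
  - by constructor 4; rewrite -E1.
  - by constructor 4; rewrite -E1.
  - by constructor 3.
have EO : [set q | fconnect (step s) z1 q] =
          [set q | fconnect (step s') z1 q] :|: [set q | fconnect (step s') z2 q].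
  apply/setP => q; rewrite !inE; apply/idP/idP.
    move=> Hq.
    apply: (@fclosed_sub _ (step s)
       (fun w => fconnect (step s') z1 w || fconnect (step s') z2 w) z1 q _ _ Hq);
      last by rewrite connect0.
    move=> w /orP Hw; case Hwc: (w.1 != c).
      by rewrite (step_off Hoff Hwc); case: Hw => Hw; apply/orP; [left|right];
        apply: fconn_trans Hw (fconnect1 _ _).
    move/negbFE/eqP: Hwc => Hwc.
    case: (Hports w Hwc) => Ew.
    - by apply/orP; right; rewrite Ew /step -E2; apply: fconnect1.
    - by apply/orP; left; rewrite Ew /step -E1; apply: fconnect1.
    - rewrite Ew -E2 in Hw; case: Hw => Hw; first by rewrite Hw in S12'.
      by move: (no_loop hm hn s' z2); rewrite Hw.
    - rewrite Ew -E1 in Hw; case: Hw => Hw; first by move: (no_loop hm hn s' z1); rewrite Hw.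
      by rewrite Hw in S21'.
  move=> /orP [] Hq.
    apply: (@fclosed_sub _ (step s') (fconnect (step s) z1) z1 q _ (connect0 _ _) Hq).
    move=> w Hw; case Hwc: (w.1 != c).
      by rewrite -(step_off Hoff Hwc); apply: fconn_trans Hw (fconnect1 _ _).
    move/negbFE/eqP: Hwc => Hwc.
    case: (Hports w Hwc) => Ew.
    - by rewrite Ew /step E1; apply: fconn_trans H (fconnect1 _ _).
    - by rewrite Ew /step E2; apply: fconnect1.
    - by move: (no_loop hm hn s z1); rewrite -Ew Hw.
    - move: (no_loop hm hn s z2); rewrite -Ew.
      by rewrite (fconn_trans _ Hw) // fconn_sym.
  apply: (@fclosed_sub _ (step s') (fconnect (step s) z1) z2 q _ H Hq).
  move=> w Hw; case Hwc: (w.1 != c).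
    by rewrite -(step_off Hoff Hwc); apply: fconn_trans Hw (fconnect1 _ _).
  move/negbFE/eqP: Hwc => Hwc.
  case: (Hports w Hwc) => Ew.
  - by rewrite Ew /step E1; apply: fconn_trans H (fconnect1 _ _).
  - by rewrite Ew /step E2; apply: fconnect1.
  - by move: (no_loop hm hn s z1); rewrite -Ew Hw.
  - move: (no_loop hm hn s z2); rewrite -Ew.
    by rewrite (fconn_trans _ Hw) // fconn_sym.
have ET : forall (t : state D) x, [set q | fconnect (step t) x q & twist D q] =
    [set q | fconnect (step t) x q] :&: [set q | twist D q].
  by move=> t x; apply/setP => q; rewrite !inE.
rewrite /TWS !ET EO setIUl cardsU.
suff -> : [set q | fconnect (step s') z1 q] :&: [set q | twist D q]
   :&: ([set q | fconnect (step s') z2 q] :&: [set q | twist D q]) = set0.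
  by rewrite cards0 subn0.
apply/setP => q; rewrite !inE; apply/negP => /andP [/andP [H1 _] /andP [H2 _]].
by move: S12; rewrite (fconn_trans H1) // fconn_sym.
Qed.

From mathcomp Require Import zify.
Import GRing.Theory.

Lemma count_swap2 (T : eqType) (P P' : pred T) e1 e2 (l : seq T) :
  e1 != e2 -> uniq l -> e1 \in l -> e2 \in l ->
  (forall x, x != e1 -> x != e2 -> P' x = P x) ->
  count P' l + P e1 + P e2 = count P l + P' e1 + P' e2.
Proof.
move=> Hne Hu H1 H2 HP.
have H2' : e2 \in rem e1 l by rewrite (rem_filter _ Hu) mem_filter /= H2 andbT eq_sym.
have Hu' : uniq (rem e1 l) by apply: rem_uniq.
set l2 := rem e2 (rem e1 l).
have E : perm_eq l (e1 :: e2 :: l2).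
  apply: (perm_trans (perm_to_rem H1)); rewrite perm_cons.
  exact: perm_to_rem H2'.
rewrite !(permP E) /=.
have -> : count P' l2 = count P l2.
  apply: eq_in_count => x Hx; apply: HP.
    by apply/negP => /eqP Ex; move: Hx; rewrite Ex /l2 (rem_filter _ Hu') mem_filter
      (rem_filter _ Hu) mem_filter /= eqxx /= andbF.
  by apply/negP => /eqP Ex; move: Hx; rewrite Ex /l2 (rem_filter _ Hu') mem_filter /= eqxx.
move: (count P l2) => n.
move: (P e1 : nat) (P e2 : nat) (P' e1 : nat) (P' e2 : nat) => a b c d.
lia.
Qed.

Lemma idx_swap (T : eqType) (a b : T) r x1 x2 : a != b ->
  ~~ ((x1 == a) && (x2 == b)) -> ~~ ((x1 == b) && (x2 == a)) ->
  (index x1 (b :: a :: r) < index x2 (b :: a :: r)) =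
  (index x1 (a :: b :: r) < index x2 (a :: b :: r)).
Proof.
move=> Hab; rewrite /=.
case: (eqVneq x1 a) => [->|H1a]; case: (eqVneq x2 b) => [->|H2b] //=;
case: (eqVneq x1 b) => [E1|H1b]; case: (eqVneq x2 a) => [E2|H2a] //=;
  rewrite ?eqxx ?(eq_sym b a) ?(negbTE Hab) ?E1 ?E2 //=;
  rewrite ?(eq_sym a) ?(eq_sym b) ?(negbTE H1a) ?(negbTE H2b) ?(negbTE H1b) ?(negbTE H2a) //=.
Qed.

Lemma sgn_flip (n n' : nat) (A B : bool) : A != B -> n' + B = n + A ->
  ((-1) ^+ n' = - (-1) ^+ n :> int)%R.
Proof.
case: A; case: B => //= _.
  by rewrite addn0 addn1 => ->; rewrite exprS mulN1r.
by rewrite addn0 addn1 => <-; rewrite exprS mulN1r opprK.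
Qed.

Lemma pair_inj (T : eqType) (s : seq T) :
  {in [seq (x, y) | x <- s, y <- s] &, injective (uncurry (@pair T T))}.
Proof. by move=> [? ?] [? ?] _ _ /=. Qed.

Lemma ps_swap_t (T : eqType) (s r : seq T) a b : a != b -> uniq s -> a \in s -> b \in s ->
  perm_sign s (b :: a :: r) = (- perm_sign s (a :: b :: r))%R.
Proof.
move=> Hab Hs Ha Hb; rewrite /perm_sign !size_filter.
have Hu := allpairs_uniq Hs Hs (@pair_inj T s).
have Hne : (a, b) != (b, a) by rewrite xpair_eqE negb_and Hab.
have Hin1 : (a, b) \in [seq (x, y) | x <- s, y <- s] by apply: allpairs_f.
have Hin2 : (b, a) \in [seq (x, y) | x <- s, y <- s] by apply: allpairs_f.
set P' := (fun xy : T * T => _ && (index xy.2 (b :: a :: r) < _)).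
set P := (fun xy : T * T => _ && (index xy.2 (a :: b :: r) < _)).
have HP : forall x, x != (a, b) -> x != (b, a) -> P' x = P x.
  move=> [x1 x2]; rewrite /P /P' /= !xpair_eqE => H1 H2.
  by rewrite idx_swap // andbC.
have := count_swap2 Hne Hu Hin1 Hin2 HP.
have Hba : (b == a) = false by rewrite eq_sym (negbTE Hab).
have P1 : P (a, b) = false by rewrite /P /= !eqxx ?Hba ?(negbTE Hab) /= ?andbF ?andbT.
have P2 : P (b, a) = (index b s < index a s) by rewrite /P /= !eqxx ?Hba ?(negbTE Hab) /= ?andbF ?andbT.
have Q1 : P' (a, b) = (index a s < index b s) by rewrite /P' /= !eqxx ?Hba ?(negbTE Hab) /= ?andbF ?andbT.
have Q2 : P' (b, a) = false by rewrite /P' /= !eqxx ?Hba ?(negbTE Hab) /= ?andbF ?andbT.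
rewrite P1 P2 Q1 Q2 /= !addn0 => E; apply: (sgn_flip _ E).
have : index a s != index b s.
  by apply/negP => /eqP /(index_inj a Ha Hb) /eqP; rewrite (negbTE Hab).
by case: ltngtP.
Qed.

Lemma ps_swap_s (T : eqType) (t r : seq T) a b : a != b -> uniq (a :: b :: r) ->
  a \in t -> b \in t ->
  perm_sign (b :: a :: r) t = (- perm_sign (a :: b :: r) t)%R.
Proof.
move=> Hab Hs Ha Hb; rewrite /perm_sign !size_filter.
have Hperm : perm_eq (b :: a :: r) (a :: b :: r).
  by apply/permP => Q; rewrite /= addnCA.
rewrite (permP (perm_allpairs (fun x y => (x, y)) Hperm Hperm)).
have Hu := allpairs_uniq Hs Hs (@pair_inj T _).
have Hne : (a, b) != (b, a) by rewrite xpair_eqE negb_and Hab.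
have Hin1 : (a, b) \in [seq (x, y) | x <- a :: b :: r, y <- a :: b :: r].
  by apply: allpairs_f; rewrite !inE eqxx ?orbT.
have Hin2 : (b, a) \in [seq (x, y) | x <- a :: b :: r, y <- a :: b :: r].
  by apply: allpairs_f; rewrite !inE eqxx ?orbT.
set P' := (fun xy : T * T => (index xy.1 (b :: a :: r) < _) && _).
set P := (fun xy : T * T => (index xy.1 (a :: b :: r) < _) && _).
have HP : forall x, x != (a, b) -> x != (b, a) -> P' x = P x.
  move=> [x1 x2]; rewrite /P /P' /= !xpair_eqE => H1 H2.
  by rewrite idx_swap.
have := count_swap2 Hne Hu Hin1 Hin2 HP.
have Hba : (b == a) = false by rewrite eq_sym (negbTE Hab).
have P1 : P (a, b) = (index b t < index a t) by rewrite /P /= !eqxx ?Hba ?(negbTE Hab) /= ?andbF ?andbT.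
have P2 : P (b, a) = false by rewrite /P /= !eqxx ?Hba ?(negbTE Hab) /= ?andbF ?andbT.
have Q1 : P' (a, b) = false by rewrite /P' /= !eqxx ?Hba ?(negbTE Hab) /= ?andbF ?andbT.
have Q2 : P' (b, a) = (index a t < index b t) by rewrite /P' /= !eqxx ?Hba ?(negbTE Hab) /= ?andbF ?andbT.
rewrite P1 P2 Q1 Q2 /= !addn0 => E; apply: (sgn_flip _ E).
have : index a t != index b t.
  by apply/negP => /eqP /(index_inj a Ha Hb) /eqP; rewrite (negbTE Hab).
by case: ltngtP.
Qed.

Import GRing.Theory.

Definition Body (D : pdiagram) (s0 : state D) (l0 : lab D) (s1 : state D) (l1 : lab D)
  (a b o1 o2 : cid D) (ea eb eo1 eo2 : int) : int :=
  let ord0 := corder s0 in let ord1 := corder s1 in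
  if (a != b) && (o1 == o2) then
    let rest := [seq x <- ord0 | x \notin [:: a; b]] in
    if [forall x, (x \in rest) ==> (l1 x == l0 x)]
       && (l1 o1 == l0 a || l0 b) && ~~ (l0 a && l0 b)
       && (cproj s0 a ==> ~~ l0 b) && (cproj s0 b ==> ~~ l0 a)
    then (perm_sign ord0 (a :: b :: rest) * perm_sign (o1 :: rest) ord1
         * xs ea (l0 a) * xs eb (l0 b) * xs eo1 (l1 o1))%R
    else 0%R
  else if (a == b) && (o1 != o2) then
    let rest := [seq x <- ord0 | x != a] in
    if [forall x, (x \in rest) ==> (l1 x == l0 x)]
       && (if cproj s0 a then
             (if cproj s1 o1 then (l1 o1 == l0 a) && l1 o2
              else (l1 o2 == l0 a) && l1 o1)
           else (if l0 a then l1 o1 && l1 o2 else l1 o1 != l1 o2))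
    then (perm_sign ord0 (a :: rest) * perm_sign (o1 :: o2 :: rest) ord1
         * xs ea (l0 a) * xs eo1 (l1 o1) * xs eo2 (l1 o2))%R
    else 0%R
  else 0%R.

Definition DE (D : pdiagram) (q : port D) (b0 b1 : basis D) : int :=
  let s0 := b0.1 in let l0 := b0.2 in let s1 := b1.1 in let l1 := b1.2 in
  if ~~ (valid b0 && valid b1) then 0%R else
  Body s0 l0 s1 l1 (cidp s0 (addp q 1)) (cidp s0 (addp q 3))
       (cidp s1 (addp q 1)) (cidp s1 (addp q 3))
       (EPS q s0 (addp q 1)) (EPS q s0 (addp q 3)) (EPS q s1 (addp q 1)) (EPS q s1 (addp q 3)).

Lemma dedgeE (D : pdiagram) (o : port D -> bool) c b0 b1 :
  dedge o c b0 b1 = DE (ne o c) b0 b1.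
Proof. reflexivity. Qed.

From mathcomp Require Import ring.

Lemma B_neg (D : pdiagram) s0 l0 s1 l1 (a b o1 o2 : cid D) ea eb eo1 eo2 :
  Body s0 l0 s1 l1 a b o1 o2 (- ea)%R (- eb)%R (- eo1)%R (- eo2)%R =
  ((if a == b then -1 else 1) * Body s0 l0 s1 l1 a b o1 o2 ea eb eo1 eo2)%R.
Proof.
rewrite /Body; case: (eqVneq a b) => [Eab|Nab] /=.
  case: ifP => _; last by rewrite mulr0.
  case: ifP => [/andP [_ Hc]|_]; last by rewrite mulr0.
  move: Hc; case: (cproj s0 a); case: (cproj s1 o1);
  case: (l0 a); case: (l1 o1); case: (l1 o2) => //= _; rewrite /xs /=; ring.
case: ifP => _; last by rewrite mulr0.
case: ifP => [/andP [/andP [/andP [/andP [_ H1] H2] _] _]|_]; last by rewrite mulr0.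
move: H1 H2; case: (l0 a); case: (l0 b); case: (l1 o1) => //= _ _; rewrite /xs /=; ring.
Qed.

Lemma B_swap_merge (D : pdiagram) s0 l0 s1 l1 (a b o1 o2 : cid D) ea eb eo1 eo2 :
  a != b -> a \in corder s0 -> b \in corder s0 -> uniq (corder s0) ->
  Body s0 l0 s1 l1 b a o1 o2 eb ea eo1 eo2 =
  (- Body s0 l0 s1 l1 a b o1 o2 ea eb eo1 eo2)%R.
Proof.
move=> Hab Ha Hb Hu; have Hba : b != a by rewrite eq_sym.
rewrite /Body Hab Hba (negbTE Hab) (negbTE Hba) /=.
case: ifP => _; last by rewrite oppr0.
have Er : [seq x <- corder s0 | x \notin [:: b; a]] = [seq x <- corder s0 | x \notin [:: a; b]].
  by apply: eq_filter => x; rewrite !inE orbC.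
rewrite Er; set F := [forall x, _].
have -> : (F && (l1 o1 == l0 b || l0 a) && ~~ (l0 b && l0 a) && (cproj s0 b ==> ~~ l0 a)
   && (cproj s0 a ==> ~~ l0 b)) = (F && (l1 o1 == l0 a || l0 b) && ~~ (l0 a && l0 b)
   && (cproj s0 a ==> ~~ l0 b) && (cproj s0 b ==> ~~ l0 a)).
  by case: F; case: (l0 a); case: (l0 b); case: (l1 o1); case: (cproj s0 a); case: (cproj s0 b).
case: ifP => _; last by rewrite oppr0.
rewrite (ps_swap_t _ Hab) //; ring.
Qed.

Lemma B_swap_split (D : pdiagram) s0 l0 s1 l1 (a o1 o2 : cid D) ea eb eo1 eo2 :
  o1 != o2 -> o1 \in corder s1 -> o2 \in corder s1 ->
  uniq (o1 :: o2 :: [seq x <- corder s0 | x != a]) ->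
  (cproj s0 a -> cproj s1 o1 != cproj s1 o2) ->
  Body s0 l0 s1 l1 a a o2 o1 ea eb eo2 eo1 =
  (- Body s0 l0 s1 l1 a a o1 o2 ea eb eo1 eo2)%R.
Proof.
move=> Ho H1 H2 Hu Hp; rewrite /Body eqxx /= Ho eq_sym Ho /=.
have -> : (if cproj s0 a then
             (if cproj s1 o2 then (l1 o2 == l0 a) && l1 o1
              else (l1 o1 == l0 a) && l1 o2)
           else (if l0 a then l1 o2 && l1 o1 else l1 o2 != l1 o1)) =
          (if cproj s0 a then
             (if cproj s1 o1 then (l1 o1 == l0 a) && l1 o2
              else (l1 o2 == l0 a) && l1 o1)
           else (if l0 a then l1 o1 && l1 o2 else l1 o1 != l1 o2)).
  case: (cproj s0 a) Hp => [/(_ isT)|_]; last by rewrite andbC eq_sym.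
  by case: (cproj s1 o1); case: (cproj s1 o2).
case: ifP => _; last by rewrite oppr0.
rewrite (ps_swap_s Ho) //; ring.
Qed.

Import GRing.Theory.

Lemma circ_sm (D : pdiagram) (hm : mate_inv D) (s : state D) x :
  circ s (sm s x) = circ s x.
Proof. by apply: (circ_trans hm); rewrite circ_sm_mem circ_self. Qed.

Lemma EPS_circ (D : pdiagram) (q : port D) (s : state D) x y :
  circ s x = circ s y -> EPS q s x = EPS q s y.
Proof. by move=> E; rewrite /EPS E (canon_eq E). Qed.

Lemma cmin_circ_eq (D : pdiagram) (hm : mate_inv D) (s : state D) x y :
  cmin s x = cmin s y -> circ s x = circ s y.
Proof. by move=> E; rewrite -(circ_cmin hm s x) E circ_cmin. Qed.

Lemma corder_mem (D : pdiagram) (hm : mate_inv D) (s : state D) x :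
  inl (cmin s x) \in corder s.
Proof.
rewrite /corder mem_cat !mem_filter -enumT mem_enum /= cmin_idem // eqxx /=.
by case: (projc _ _).
Qed.

Lemma corder_uniq (D : pdiagram) (s : state D) : uniq (corder s).
Proof.
rewrite /corder cat_uniq; apply/and3P; split;
  [exact: filter_uniq (enum_uniq _)| |exact: filter_uniq (enum_uniq _)].
apply/hasPn => x; rewrite !mem_filter => /andP [/andP [_ H1] _].
by apply/negP => /andP [/andP [_ H2] _]; rewrite H1 in H2.
Qed.

Lemma circ_incl (D : pdiagram) (hm : mate_inv D) (c : 'I_(ncross D))
  (s s' : state D) (Hoff : forall x, x != c -> s x = s' x) x :
  (forall z, z.1 = c -> z \in circ s x) -> {subset circ s' x <= circ s x}.
Proof.
move=> Hall.
have Hcl : forall w, w \in circ s x -> step s' w \in circ s x.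
  move=> w Hw; case Hwc: (w.1 != c).
    by rewrite -(step_off Hoff Hwc); apply: circ_step.
  move/negbFE/eqP: Hwc => Hwc.
  have -> : step s' w = step s (sm s (sm s' w)) by rewrite /step sm_invol.
  by apply: circ_step => //; apply: Hall; rewrite !sm_fst.
have Hsm : forall w, w \in circ s x -> sm s' w \in circ s x.
  move=> w Hw; case Hwc: (w.1 != c).
    by rewrite -(sm_same (s := s)) ?Hoff // circ_sm_mem.
  by move/negbFE/eqP: Hwc => Hwc; apply: Hall; rewrite sm_fst.
move=> y; rewrite circE => /orP [] H.
  exact: (fclosed_sub (A := fun w => w \in circ s x) Hcl (circ_self s x) H).
rewrite -[y](sm_invol s'); apply: Hsm.
exact: (fclosed_sub (A := fun w => w \in circ s x) Hcl (circ_self s x) H).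
Qed.

Lemma Body_zero1 (D : pdiagram) s0 l0 s1 l1 (a b o1 o2 : cid D) ea eb eo1 eo2 :
  a != b -> o1 != o2 -> Body s0 l0 s1 l1 a b o1 o2 ea eb eo1 eo2 = 0%R.
Proof. by move=> H1 H2; rewrite /Body H1 (negbTE H1) (negbTE H2). Qed.

Lemma Body_zero2 (D : pdiagram) s0 l0 s1 l1 (a b o1 o2 : cid D) ea eb eo1 eo2 :
  a = b -> o1 = o2 -> Body s0 l0 s1 l1 a b o1 o2 ea eb eo1 eo2 = 0%R.
Proof. by move=> -> ->; rewrite /Body !eqxx. Qed.

Import GRing.Theory.

Lemma sm_addp (D : pdiagram) (s : state D) (q : port D) i :
  sm s (addp q i) = addp q (i + (if s q.1 == odd q.2 (+) odd i then 1 else 3)).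
Proof. by rewrite smE addp_fst odd_addp addpA. Qed.

Lemma inl_neq (D : pdiagram) (x y : port D) : x != y -> (inl x : cid D) != inl y.
Proof. by apply: contra => /eqP [->]. Qed.

Lemma corder_circ (D : pdiagram) (s : state D) x : x \in corder s -> is_circle s x.
Proof. by rewrite /corder mem_cat !mem_filter => /orP [] /andP [/andP [] ]. Qed.

Lemma all_ports (D : pdiagram) (hm : mate_inv D) (c : 'I_(ncross D)) (s0 s1 : state D)
  (Hc : s0 c != s1 c) y :
  y.1 = c -> cmin s0 y = cmin s0 (addp y 2) -> forall z, z.1 = c -> z \in circ s0 y.
Proof.
move=> Hy EA z Hz.
have Hd : s0 y.1 != s1 y.1 by rewrite Hy.
have C2 : addp y 2 \in circ s0 y by rewrite (cmin_circ_eq hm EA) circ_self.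
have Hzy : z.1 = y.1 by rewrite Hz Hy.
have E : sm s1 y = sm s0 (addp y 2).
  by rewrite -(sm_other (s := s1) (s' := s0)) ?sm_invol // eq_sym.
case: (rot4 Hzy) => ->; rewrite ?circ_self //.
- case: (nbr Hd) => [[E1 E2]|[E1 E2]].
    by rewrite -E1 circ_sm_mem circ_self.
  by rewrite -E2 E circ_sm_mem.
- case: (nbr Hd) => [[E1 E2]|[E1 E2]].
    by rewrite -E2 E circ_sm_mem.
  by rewrite -E1 circ_sm_mem circ_self.
Qed.

Lemma split_uniq (D : pdiagram) (hm : mate_inv D) (hn : mate_nfix D)
  (c : 'I_(ncross D)) (s0 s1 : state D) (Hc : s0 c != s1 c)
  (Hoff : forall x, x != c -> s0 x = s1 x) y :
  y.1 = c -> cmin s0 y = cmin s0 (addp y 2) -> cmin s1 y != cmin s1 (addp y 2) ->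
  uniq (inl (cmin s1 y) :: inl (cmin s1 (addp y 2)) :: [seq x <- corder s0 | x != inl (cmin s0 y)]).
Proof.
move=> Hy EA NB.
have Hall := all_ports hm Hc Hy EA.
have Hy2 : (addp y 2).1 = c by rewrite addp_fst.
have Hall2 : forall z, z.1 = c -> z \in circ s0 (addp y 2).
  by move=> z Hz; rewrite -(cmin_circ_eq hm EA); apply: Hall.
have I1 := circ_incl hm Hoff Hall.
have I2 := circ_incl hm Hoff Hall2.
have NotR : forall B, B \in circ s0 y -> inl B \notin [seq x <- corder s0 | x != inl (cmin s0 y)].
  move=> B HB; rewrite mem_filter; apply/negP => /andP [Hne /corder_circ /= /eqP HC].
  by move: Hne; rewrite -HC (cmin_mem hm HB) eqxx.
rewrite /= inE negb_or inl_neq //= filter_uniq ?corder_uniq // andbT.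
rewrite !NotR //.
  all: try (by apply: I1; apply: cmin_in).
  all: by rewrite (cmin_circ_eq hm EA); apply: I2; apply: cmin_in.
Qed.

Lemma split_cproj (D : pdiagram) (hm : mate_inv D) (hn : mate_nfix D) (ht : tw_sym D)
  (c : 'I_(ncross D)) (s0 s1 : state D) (Hc : s0 c != s1 c)
  (Hoff : forall x, x != c -> s0 x = s1 x) y :
  y.1 = c -> cmin s0 y = cmin s0 (addp y 2) -> cmin s1 y != cmin s1 (addp y 2) ->
  cproj s0 (inl (cmin s0 y)) -> cproj s1 (inl (cmin s1 y)) != cproj s1 (inl (cmin s1 (addp y 2))).
Proof.
move=> Hy EA NB; rewrite /=.
have Hall := all_ports hm Hc Hy EA.
have Sep : (cmin s0 y != cmin s0 (addp y 2)) || (cmin s1 y != cmin s1 (addp y 2)).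
  by rewrite NB orbT.
have HC := hcond hm hn Hc Hoff Hy Sep.
set m := cmin s0 y.
have Cm : circ s0 m = circ s0 y by apply: circ_cmin.
have cn2 : forall z, z.1 = c -> canon s0 y (addp z 2) = canon s0 y z.
  move=> z Hz; have Hd : s1 z.1 != s0 z.1 by rewrite Hz eq_sym.
  rewrite -(sm_other Hd) canon_sm //; last by apply: Hall; rewrite sm_fst.
  by rewrite HC ?negbK //; apply: Hall; rewrite ?sm_fst.
set z1 := if canon s0 y y then y else sm s0 y.
have Hz1 : z1.1 = c by rewrite /z1; case: ifP; rewrite ?sm_fst.
have Cz1 : canon s0 y z1.
  by rewrite /z1; case: ifP => // /negbT H; rewrite canon_sm // circ_self.
have Fz : fconnect (step s0) z1 (addp z1 2).
  move: (Cz1); rewrite -(cn2 _ Hz1) /canon -/m => H2.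
  by apply: fconn_trans H2; rewrite fconn_sym.
have Hdy : s1 y.1 != s0 y.1 by rewrite Hy eq_sym.
have Hz1y : z1.1 = y.1 by rewrite Hz1 Hy.
have Nz := opp_inv hm Hdy Hz1y NB.
have TS := tw_split hm hn Hc Hoff Hz1 Nz Fz.
rewrite (projc_TW hm ht (x := z1)); last by rewrite Cm; apply: Hall.
rewrite TS oddD.
suff : (z1 \in circ s1 y /\ addp z1 2 \in circ s1 (addp y 2)) \/
               (z1 \in circ s1 (addp y 2) /\ addp z1 2 \in circ s1 y).
  case => [[H1 H2]|[H1 H2]].
  - rewrite (projc_TW hm ht (x := z1)) ?circ_cmin //.
    rewrite (projc_TW hm ht (x := addp z1 2)) ?circ_cmin //.
    by case: (odd _); case: (odd _).
  - rewrite (projc_TW hm ht (x := addp z1 2)) ?circ_cmin //.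
    rewrite (projc_TW hm ht (x := z1)) ?circ_cmin //.
    by case: (odd _); case: (odd _).
have Hd0 : s0 y.1 != s1 y.1 by rewrite Hy.
rewrite /z1; case: ifP => _; first by left; rewrite !circ_self.
right; split.
  by rewrite -circ_sm_mem (sm_other Hd0) circ_self.
have Hd2 : s0 (addp y 2).1 != s1 (addp y 2).1 by rewrite addp_fst.
rewrite -sm_rot2 -circ_sm_mem (sm_other Hd2) addpA addp4.
exact: circ_self.
Qed.

Lemma DE_rot (D : pdiagram) (hm : mate_inv D) (hn : mate_nfix D) (ht : tw_sym D)
  (c : 'I_(ncross D)) (q : port D) s0 l0 s1 l1 :
  q.1 = c -> is_edge c s0 s1 ->
  DE (addp q 1) (s0, l0) (s1, l1) = ((if odd q.2 then 1 else -1) * DE q (s0, l0) (s1, l1))%R.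
Proof.
move=> Hq /andP [/andP [H0 H1] Hall].
have Hoff : forall x, x != c -> s0 x = s1 x.
  by move=> x Hx; apply/eqP; move/forallP: Hall => /(_ x); rewrite Hx.
have Hoff' : forall x, x != c -> s1 x = s0 x by move=> x Hx; rewrite Hoff.
have Hc : s0 c != s1 c by rewrite (negbTE H0) H1.
have Hc' : s1 c != s0 c by rewrite eq_sym.
rewrite /DE /=; case: ifP => _; first by rewrite mulr0.
have [A4 A5 A6 A0] := addpN q.
have E2 : addp (addp q 1) 1 = addp q 2 by rewrite addpA.
have E0 : addp (addp q 1) 3 = q by rewrite addpA.
rewrite E2 E0.
set p1 := addp q 1; set p2 := addp q 2; set p3 := addp q 3.
have Hp : forall i, (addp q i).1 = c by move=> i; rewrite addp_fst.
have s0q : s0 q.1 = false by rewrite Hq (negbTE H0).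
have s1q : s1 q.1 = true by rewrite Hq.
have S01 : sm s0 p1 = if odd q.2 then p2 else q.
  by rewrite /p1 sm_addp s0q /=; case: (odd q.2) => /=; rewrite ?A4.
have S03 : sm s0 p3 = if odd q.2 then q else p2.
  by rewrite /p3 sm_addp s0q /=; case: (odd q.2) => /=; rewrite ?A4 ?A6.
have S11 : sm s1 p1 = if odd q.2 then q else p2.
  by rewrite /p1 sm_addp s1q /=; case: (odd q.2) => /=; rewrite ?A4.
have S13 : sm s1 p3 = if odd q.2 then p2 else q.
  by rewrite /p3 sm_addp s1q /=; case: (odd q.2) => /=; rewrite ?A4 ?A6.
have Hp3 : addp p1 2 = p3 by rewrite addpA.
rewrite /cidp.
set A1 := cmin s0 p1; set A3 := cmin s0 p3; set B1 := cmin s1 p1; set B3 := cmin s1 p3.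
have CS : forall (s : state D) x y, sm s x = y -> cmin s y = cmin s x /\ circ s y = circ s x.
  by move=> s x y <-; rewrite cmin_sm // circ_sm.
case Sep : ((A1 != A3) || (B1 != B3)); last first.
  move/negbT: Sep => /norP [/negbNE/eqP EA /negbNE/eqP EB].
  rewrite [X in (_ * X)%R]Body_zero2 ?mulr0 ?EA ?EB //.
  apply: Body_zero2; case: (odd q.2) in S01 S03 S11 S13 *;
  by rewrite ?(CS _ _ _ S01).1 ?(CS _ _ _ S03).1 ?(CS _ _ _ S11).1 ?(CS _ _ _ S13).1
     -/A1 -/A3 -/B1 -/B3 ?EA ?EB.
have Sep0 : (cmin s0 p1 != cmin s0 (addp p1 2)) || (cmin s1 p1 != cmin s1 (addp p1 2)).
  by rewrite Hp3.
have Sep1 : (cmin s1 p1 != cmin s1 (addp p1 2)) || (cmin s0 p1 != cmin s0 (addp p1 2)).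
  by rewrite orbC.
have HC0 := hcond hm hn Hc Hoff (Hp 1) Sep0.
have HC1 := hcond hm hn Hc' Hoff' (Hp 1) Sep1.
have F0 : forall p, p.1 = c -> EPS p1 s0 p = (- EPS q s0 p)%R.
  by move=> p Hpc; apply: (EPS_flip hm hn Hc Hq Hpc (fun z => HC0 z p)).
have F1 : forall p, p.1 = c -> EPS p1 s1 p = (- EPS q s1 p)%R.
  by move=> p Hpc; apply: (EPS_flip hm hn Hc' Hq Hpc (fun z => HC1 z p)).
rewrite (F0 p2 (Hp 2)) (F0 q Hq) (F1 p2 (Hp 2)) (F1 q Hq).
have Hu0 := corder_uniq s0.
have M0 := corder_mem hm s0; have M1 := corder_mem hm s1.
case: (odd q.2) in S01 S03 S11 S13 *.
-
  have -> : ((if true then 1 else -1)%R : int) = 1%R by [].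
  rewrite (CS _ _ _ S01).1 (CS _ _ _ S03).1 (CS _ _ _ S11).1 (CS _ _ _ S13).1.
  rewrite (EPS_circ _ (CS _ _ _ S01).2) (EPS_circ _ (CS _ _ _ S03).2).
  rewrite (EPS_circ _ (CS _ _ _ S11).2) (EPS_circ _ (CS _ _ _ S13).2) -/A1 -/A3 -/B1 -/B3.
  case: (eqVneq B1 B3) => [EB|NB].
    have EE : EPS q s1 p3 = EPS q s1 p1.
      by apply: EPS_circ; apply: cmin_circ_eq => //; rewrite -/B1 -/B3 EB.
    rewrite EE -EB B_neg.
    case: (eqVneq A1 A3) => [EA|NA].
      by rewrite !Body_zero2 ?EA ?mulr0.
    have NA' : (inl A1 == inl A3 :> cid D) = false by apply/negbTE/inl_neq.
    by rewrite NA' !mul1r.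
  case: (eqVneq A1 A3) => [EA|NA].
    2: by rewrite !Body_zero1 ?mulr0 // inl_neq // eq_sym.
  have EE : EPS q s0 p3 = EPS q s0 p1.
    by apply: EPS_circ; apply: cmin_circ_eq => //; rewrite -/A1 -/A3 EA.
  rewrite EE -EA mul1r.
  have NB' : inl B1 != inl B3 :> cid D by apply: inl_neq.
  rewrite B_swap_split ?M1 //.
    by rewrite B_neg eqxx mulN1r opprK.
  + rewrite /B1 /B3 /A1 -Hp3; apply: (split_uniq hm hn Hc Hoff (Hp 1)).
      by rewrite Hp3.
    by rewrite Hp3.
  + rewrite /B1 /B3 /A1 -Hp3; apply: (split_cproj hm hn ht Hc Hoff (Hp 1)).
      by rewrite Hp3.
    by rewrite Hp3.
-
  rewrite (CS _ _ _ S01).1 (CS _ _ _ S03).1 (CS _ _ _ S11).1 (CS _ _ _ S13).1.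
  rewrite (EPS_circ _ (CS _ _ _ S01).2) (EPS_circ _ (CS _ _ _ S03).2).
  rewrite (EPS_circ _ (CS _ _ _ S11).2) (EPS_circ _ (CS _ _ _ S13).2) -/A1 -/A3 -/B1 -/B3.
  case: (eqVneq A1 A3) => [EA|NA].
    have EE : EPS q s0 p3 = EPS q s0 p1.
      by apply: EPS_circ; apply: cmin_circ_eq => //; rewrite -/A1 -/A3 EA.
    by rewrite EE -EA B_neg eqxx.
  case: (eqVneq B1 B3) => [EB|NB].
    2: by rewrite !Body_zero1 ?mulr0 // inl_neq // eq_sym.
  have NA' : inl A1 != inl A3 :> cid D by apply: inl_neq.
  by rewrite B_swap_merge ?M0 // B_neg (negbTE NA') mul1r mulN1r.
Qed.

Import GRing.Theory.
From mathcomp Require Import ring.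

Fixpoint rs (D : pdiagram) (q : port D) (j : nat) : int :=
  match j with 0 => 1%R | j'.+1 => (rs q j' * (if odd (addp q j').2 then 1 else -1))%R end.

Lemma rs_sq (D : pdiagram) (q : port D) j : (rs q j * rs q j = 1)%R.
Proof.
elim: j => [|j IH] /=; first by rewrite mulr1.
rewrite mulrACA IH mul1r; by case: ifP; rewrite ?mulr1 ?mulrNN ?mulr1.
Qed.

Lemma DE_rotn (D : pdiagram) (hm : mate_inv D) (hn : mate_nfix D) (ht : tw_sym D)
  (c : 'I_(ncross D)) (q : port D) s0 l0 s1 l1 j :
  q.1 = c -> is_edge c s0 s1 ->
  DE (addp q j) (s0, l0) (s1, l1) = (rs q j * DE q (s0, l0) (s1, l1))%R.
Proof.
move=> Hq He; elim: j => [|j IH] /=; first by rewrite addp1 mul1r.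
have Hq' : (addp q j).1 = c by rewrite addp_fst.
rewrite -addn1 -addpA (DE_rot hm hn ht l0 l1 Hq' He).
by rewrite IH mulrA [(_ * rs q j)%R]mulrC.
Qed.

Lemma rot_expl (D : pdiagram) (p y : port D) : y.1 = p.1 ->
  y = addp p ((y.2 + 4 - p.2) %% 4).
Proof.
case: p y => c [k Hk] [c' [k' Hk']] /= ->.
rewrite /addp /=; congr pair; apply: val_inj => /=.
rewrite modnDmr.
by move: Hk Hk'; do 4?[case: k => [|k]] => // _; do 4?[case: k' => [|k']].
Qed.

Definition Lam (D : pdiagram) (o1 o2 : port D -> bool) (c : 'I_(ncross D)) : int :=
  rs (ne o1 c) (((ne o2 c).2 + 4 - (ne o1 c).2) %% 4).

Lemma Lam_sq (D : pdiagram) (o1 o2 : port D -> bool) c : (Lam o1 o2 c * Lam o1 o2 c = 1)%R.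
Proof. exact: rs_sq. Qed.

Lemma dedge_rel (D : pdiagram) (hm : mate_inv D) (hn : mate_nfix D) (ht : tw_sym D)
  (o1 o2 : port D -> bool) c (b0 b1 : basis D) :
  is_edge c b0.1 b1.1 -> dedge o2 c b0 b1 = (Lam o1 o2 c * dedge o1 c b0 b1)%R.
Proof.
case: b0 b1 => s0 l0 [s1 l1] /= He; rewrite !dedgeE.
have E : (ne o2 c).1 = (ne o1 c).1 by [].
by rewrite {1}(rot_expl E) (DE_rotn hm hn ht _ _ _ _ He).
Qed.

Definition sig (D : pdiagram) (o1 o2 : port D -> bool) (b : basis D) : int :=
  (\prod_(c | b.1 c) Lam o1 o2 c)%R.

Lemma sig_sq (D : pdiagram) (o1 o2 : port D -> bool) b : (sig o1 o2 b * sig o1 o2 b = 1)%R.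
Proof.
rewrite /sig -big_split /=; apply: big1 => c _; exact: Lam_sq.
Qed.

Lemma sig_edge (D : pdiagram) (o1 o2 : port D -> bool) c (b0 b1 : basis D) :
  is_edge c b0.1 b1.1 -> sig o1 o2 b1 = (Lam o1 o2 c * sig o1 o2 b0)%R.
Proof.
move=> /andP [/andP [H0 H1] Hall]; rewrite /sig (bigD1 c) //=; congr (_ * _)%R.
apply: eq_bigl => c'; case: (eqVneq c' c) => [->|Hne]; first by rewrite (negbTE H0) andbF.
by rewrite andbT; move/forallP: Hall => /(_ c'); rewrite Hne /= => /eqP ->.
Qed.

Lemma dcoef_rel (D : pdiagram) (hm : mate_inv D) (hn : mate_nfix D) (ht : tw_sym D)
  (o1 o2 : port D -> bool) (b0 b1 : basis D) :
  dcoef o2 b0 b1 = (sig o1 o2 b0 * sig o1 o2 b1 * dcoef o1 b0 b1)%R.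
Proof.
rewrite /dcoef mulr_sumr; apply: eq_bigr => c He.
rewrite (dedge_rel hm hn ht o1 o2 He) (sig_edge _ _ He).
by rewrite [(sig _ _ b0 * _)%R]mulrCA sig_sq mulr1.
Qed.

Definition fsig (D : pdiagram) (o1 o2 : port D -> bool) (x : chain D) : chain D :=
  [ffun b => (sig o1 o2 b * x b)%R].

Lemma fsigK (D : pdiagram) (o1 o2 : port D -> bool) x : fsig o1 o2 (fsig o1 o2 x) = x.
Proof. by apply/ffunP => b; rewrite !ffunE mulrA sig_sq mul1r. Qed.

Lemma dmap_fsig (D : pdiagram) (hm : mate_inv D) (hn : mate_nfix D) (ht : tw_sym D)
  (o1 o2 : port D -> bool) x :
  dmap o2 (fsig o1 o2 x) = fsig o1 o2 (dmap o1 x).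
Proof.
apply/ffunP => b1; rewrite !ffunE mulr_sumr; apply: eq_bigr => b0 _.
rewrite ffunE (dcoef_rel hm hn ht o1).
have S := sig_sq o1 o2 b0.
rewrite -[in RHS](mul1r (sig o1 o2 b1 * _)%R) -S; ring.
Qed.

Import GRing.Theory.
Local Open Scope ring_scope.

Unset Implicit Arguments.
Theorem lemma2 (D : pdiagram) (o1 o2 : port D -> bool) :
  well_formed D -> realizable D -> orientation o1 -> orientation o2 ->
  homology_iso o1 o2.
Proof.
move=> [hm [hn ht]] _ _ _ i j k.
have dm := dmap_fsig hm hn ht o1 o2.
have dm' : forall x, dmap o1 (fsig o1 o2 x) = fsig o1 o2 (dmap o2 x).
  by move=> x; rewrite -[in RHS](fsigK o1 o2 x) dm fsigK.
have f0 : fsig o1 o2 0 = 0%R by apply/ffunP => b; rewrite !ffunE mulr0.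
have sup : forall x b, fsig o1 o2 x b != 0%R -> x b != 0%R.
  by move=> x b; rewrite ffunE; apply: contra => /eqP ->; rewrite mulr0.
have fCg : forall x, inCg i j k x -> inCg i j k (fsig o1 o2 x).
  by move=> x H b /sup /H.
have fC : forall i' x, inC i' x -> inC i' (fsig o1 o2 x).
  by move=> i' x H b /sup /H.
have d0 : forall (o : port D -> bool), dmap o 0 = 0%R.
  by move=> o; apply/ffunP => b; rewrite !ffunE big1 // => b0 _; rewrite ffunE mul0r.
exists (fsig o1 o2); split.
- by move=> x y _ _; apply/ffunP => b; rewrite !ffunE mulrDr.
- by move=> x [H1 H2]; split; [apply: fCg | rewrite dm H2].
- move=> x [H1 [y [Hy Hdy]]]; split; first exact: fCg.
  by exists (fsig o1 o2 y); split; [apply: fC | rewrite dm Hdy].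
- move=> x [H1 _] [_ [y [Hy Hdy]]]; split => //.
  by exists (fsig o1 o2 y); split; [apply: fC | rewrite dm' Hdy fsigK].
- move=> z [H1 H2]; exists (fsig o1 o2 z); split.
    by split; [apply: fCg | rewrite dm' H2].
  rewrite fsigK subrr; split; first by move=> b; rewrite ffunE eqxx.
  by exists 0%R; split; [move=> b; rewrite ffunE eqxx | apply: d0].
Qed.
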